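(* Let $n\ge3$ and $1\le s\le n-1$. Let $I,J\subseteq\{1,\dots,n\}$ with $|I|=s$, $|J|=s+1$, $n\in J$; put $m(J):=\max(J\setminus\{n\})$, and let $i\in CI$ and $j\in J\setminus\{m(J)\}$. Then $\theta_{m(J),j}(J)\in(1+\mathfrak a_{n,s})^*$ and $$\deg_{n,I,i}\big(\theta_{m(J),j}(J)\big)=\begin{cases}-1,& I=J\setminus\{m(J)\},\ i=m(J),\\ 1,& I=J\setminus\{j\},\ i=j,\\ 0,&\text{otherwise}.\end{cases}$$
   Context: $K$ is a field, $\mathbb N=\{0,1,\dots\}$. $\mathbb S_n$: $K$-algebra generated by $x_1,\dots,x_n,y_1,\dots,y_n$ with relations $y_ix_i=1$, $[x_i,y_j]=[x_i,x_j]=[y_i,y_j]=0$ ($i\neq j$). $E_{st}(i):=x_i^sy_i^t-x_i^{s+1}y_i^{t+1}$, $e_i:=E_{00}(i)$, $e_I:=\prod_{i\in I}e_i$, $E_{\alpha\beta}(I):=\prod_{i\in I}E_{\alpha_i\beta_i}(i)$. $\theta_{ij}(J):=(1+(y_i-1)e_{J\setminus\{i\}})(1+(x_j-1)e_{J\setminus\{j\}})$. $\mathfrak p_i$ = ideal generated by $e_i$, $\mathfrak p_I:=\prod_{i\in I}\mathfrak p_i$, $\mathfrak a_{n,s}:=\sum_{|I|=s}\mathfrak p_I$, $\mathfrak a_{n,n+1}:=0$; $(1+\mathfrak b)^*$ = units of $\mathbb S_n$ in $1+\mathfrak b$. $CI$ = complement of $I$; $\mathbb S_{CI}$ = subalgebra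 generated by $x_k,y_k$, $k\in CI$; $L_{CI}:=K[x_k^{\pm1}:k\in CI]$, with surjection $\mathbb S_{CI}\to L_{CI}$, $x_k\mapsto x_k$, $y_k\mapsto x_k^{-1}$ (kernel generated by the $e_k$, $k\in CI$). Definition of $\det_I$ and $\deg_{n,I,i}$ for $|I|=s<n$: let $\pi:K+\mathfrak a_{n,s}\to Q:=(K+\mathfrak a_{n,s})/\mathfrak a_{n,s+1}$. Then $Q=K\oplus\bigoplus_{|I'|=s}\overline{\mathfrak p}_{I'}$ with $\overline{\mathfrak p}_{I'}$ the image of $\mathfrak p_{I'}$, $\overline{\mathfrak p}_{I'}\overline{\mathfrak p}_{I''}=0$ for $I'\ne I''$, and $\overline{\mathfrak p}_{I}\simeq M_\infty(L_{CI})$ (finitary $\mathbb N^I\times\mathbb N^I$ matrices) via $\overline{aE_{\alpha\beta}(I)}\mapsto\bar a E_{\alpha\beta}$, $a\in\mathbb S_{CI}$. For $u\in(1+\mathfrak a_{n,s})^*$ write $\pi(u)=1+\sum_{|I'|=s}\bar u_{I'}$, $\bar u_{I'}\in\overline{\mathfrak p}_{I'}$; then $1+\bar u_I$ corresponds to a matrix in $\mathrm{GL}_\infty(L_{CI})$ and $\det_I(u)\in L_{CI}^*$ is its determinant; $\det_I:(1+\mathfrak a_{n,s})^*\to L_{CI}^*$ is a group homomorphism. Since $L_{CI}^*=\{\lambda\prod_{k\in CI}x_k^{\alpha_k}:\lambda\in K^*,\alpha_k\in\mathbb Z\}$, for $i\in CI$ define $\deg_{n,I,i}(u):=$ the exponent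 $\alpha_i$ of $x_i$ in $\det_I(u)$. *)

(* Defs.v *)
From HB Require Import structures.
From mathcomp Require Import all_boot all_order all_algebra.
From mathcomp Require Import fingroup perm.
Set Implicit Arguments.
Unset Strict Implicit.
Unset Printing Implicit Defensive.
Import Order.TTheory GRing.Theory Num.Theory.
Local Open Scope ring_scope.

(* S_n = S_1^{(x) n}, S_1 = K<x,y | yx = 1> (Jacobson algebra).  S_n  *)
(* has the K-basis of monomials x^a y^b = prod_i x_i^{a_i} y_i^{b_i}  *)
(* (a, b in N^n); i.e. S_n is the monoid algebra of the n-th power of *)
(* the bicyclic monoid, with (x^a y^b)(x^c y^d) = x^{a+(c-b)} y^{(b-c)+d} *)
(* (truncated subtraction, componentwise).  We represent an element   *)
(* of S_n by a finite formal K-linear combination of monomials (a list*)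
(* of (coefficient, monomial) pairs); two lists represent the same    *)
(* element iff they have the same coefficient at every monomial       *)
(* (relation [Seq]).  Indices 1..n of the paper are 'I_n = {0..n-1}.  *)

Section Sn.
Variables (K : fieldType) (n : nat).

Definition mono := ({ffun 'I_n -> nat} * {ffun 'I_n -> nat})%type.

Definition mono_mul (m1 m2 : mono) : mono :=
  ([ffun k => (m1.1 k + (m2.1 k - m1.2 k))%N],
   [ffun k => ((m1.2 k - m2.1 k) + m2.2 k)%N]).

Definition mono1 : mono := ([ffun _ => 0%N], [ffun _ => 0%N]).

Definition Sn := seq (K * mono)%type.

Definition Scoef (u : Sn) (m : mono) : K := \sum_(p <- u | p.2 == m) p.1.

Definition Seq (u v : Sn) : Prop := forall m, Scoef u m = Scoef v m.

Definition S0 : Sn := [::].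
Definition S1 : Sn := [:: (1, mono1)].
Definition Sadd (u v : Sn) : Sn := u ++ v.
Definition Sopp (u : Sn) : Sn := [seq (- p.1, p.2) | p <- u].
Definition Ssub (u v : Sn) : Sn := Sadd u (Sopp v).
Definition Smul (u v : Sn) : Sn :=
  [seq (p.1 * q.1, mono_mul p.2 q.2) | p <- u, q <- v].
Definition Sprod (s : seq Sn) : Sn := foldr Smul S1 s.
Definition Ssum (s : seq Sn) : Sn := foldr Sadd S0 s.

Definition Sx (i : 'I_n) : Sn :=
  [:: (1, ([ffun k => (k == i) : nat], [ffun _ => 0%N]))].
Definition Sy (i : 'I_n) : Sn :=
  [:: (1, ([ffun _ => 0%N], [ffun k => (k == i) : nat]))].

Definition Se (i : 'I_n) : Sn := Ssub S1 (Smul (Sx i) (Sy i)).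
Definition SeI (I : {set 'I_n}) : Sn := Sprod [seq Se i | i <- enum I].

Definition theta (i j : 'I_n) (J : {set 'I_n}) : Sn :=
  Smul (Sadd S1 (Smul (Ssub (Sy i) S1) (SeI (J :\ i))))
       (Sadd S1 (Smul (Ssub (Sx j) S1) (SeI (J :\ j)))).

(* Ideals.  p_i = two-sided ideal generated by e_i; p_I = prod_{i in I}*)
(* p_i (product of ideals, over I in increasing order), whose elements*)
(* are the finite sums of words a_0 e_{i_1} a_1 e_{i_2} ... e_{i_s} a_s *)
(* (I = {i_1 < ... < i_s}); a_{n,s} = sum_{|I| = s} p_I.               *)

Definition pword (I : {set 'I_n}) (a0 : Sn) (as_ : seq Sn) : Sn :=
  Smul a0 (Sprod [seq Smul (Se k.1) k.2 | k <- zip (enum I) as_]).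

Definition in_a (s : nat) (w : Sn) : Prop :=
  exists ts : seq ({set 'I_n} * Sn * seq Sn),
    (forall t, t \in ts -> #|t.1.1| = s /\ size t.2 = s) /\
    Seq w (Ssum [seq pword t.1.1 t.1.2 t.2 | t <- ts]).

Definition in_units_1a (s : nat) (u : Sn) : Prop :=
  in_a s (Ssub u S1) /\ exists v, Seq (Smul u v) S1 /\ Seq (Smul v u) S1.

(* Coefficient field for determinants.  L_{CI} = K[x_k^{+-1} : k in CI]*)
(* is realised inside the field of rational functions                 *)
(* K(X_0, ..., X_{n-1}) = Frac(K[X_0][X_1]...[X_{n-1}]).               *)
End Sn.

Fixpoint Pn (K : fieldType) (n : nat) : idomainType :=
  if n is m.+1 then ({poly Pn K m} : idomainType) else (K : idomainType).

Fixpoint Pvar (K : fieldType) (n : nat) (k : nat) : Pn K n :=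
  match n return Pn K n with
  | 0 => 0
  | m.+1 => if k == m then ('X : {poly Pn K m}) else (Pvar K m k)%:P
  end.

Fixpoint Pcst (K : fieldType) (n : nat) (c : K) : Pn K n :=
  match n return Pn K n with
  | 0 => c
  | m.+1 => (Pcst m c)%:P
  end.

Definition Ratf (K : fieldType) (n : nat) : fieldType := {fraction Pn K n}.

Definition RX (K : fieldType) (n : nat) (k : 'I_n) : Ratf K n :=
  @FracField.tofrac (Pn K n) (Pvar K n k).
Definition RC (K : fieldType) (n : nat) (c : K) : Ratf K n :=
  @FracField.tofrac (Pn K n) (Pcst n c).

Definition detT (R : comNzRingType) (T : finType) (A : T -> T -> R) : R :=
  \sum_(s : {perm T}) (-1) ^+ s * \prod_(t : T) A t (s t).

Section Det.
Variables (K : fieldType) (n : nat).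

(* det_I.  The image of u in Q, component p_I, corresponds to a matrix *)
(* 1 + \bar u_I in GL_oo(L_{CI}) (rows/columns indexed by N^I).  This  *)
(* is exactly the matrix of the action of u on the free L_{CI}-module *)
(* with basis e_g (g in N^I) in which x_k, y_k (k in CI) act as the    *)
(* scalars x_k, x_k^{-1} and, for i in I, x_i e_g = e_{g + 1_i},       *)
(* y_i e_g = e_{g - 1_i} (0 if g_i = 0): E_{ab}(I) acts as the matrix *)
(* unit E_{ab}, and all p_{I'} (I' <> I, |I'| = s) and a_{n,s+1} act  *)
(* by 0.  Entry (g, h) of the monomial x^a y^b is                      *)
(*  [forall i in I, b_i <= h_i and g_i = h_i - b_i + a_i] *             *)
(*  prod_{k in CI} x_k^{a_k - b_k}.                                    *)

Definition Mentry (I : {set 'I_n}) (u : Sn K n) (g h : 'I_n -> nat)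
  : Ratf K n :=
  \sum_(p <- u)
    (if [forall i in I, (p.2.2 i <= h i)%N && (g i == h i - p.2.2 i + p.2.1 i)%N]
     then @RC K n p.1 *
          \prod_(k in ~: I) @RX K n k ^ ((p.2.1 k)%:Z - (p.2.2 k)%:Z)
     else 0).

Definition box (I : {set 'I_n}) (N : nat) :=
  {g : {ffun 'I_n -> 'I_N.+1} | [forall k, (k \notin I) ==> (val (g k) == 0%N)]}.

Definition Mtrunc (I : {set 'I_n}) (u : Sn K n) (N : nat)
  (g h : box I N) : Ratf K n :=
  Mentry I u (fun k => val (val g k)) (fun k => val (val h k)).

(* det_I(u) = d : the determinants of the truncations of the matrix   *)
(* 1 + \bar u_I to the boxes [0, N]^I are eventually equal to d (they  *)
(* equal det(1 + \bar u_I) once the box contains its support).         *)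
Definition det_is (I : {set 'I_n}) (u : Sn K n) (d : Ratf K n) : Prop :=
  exists N0, forall N, (N0 <= N)%N -> detT (@Mtrunc I u N) = d.

Definition deg_is (I : {set 'I_n}) (i : 'I_n) (u : Sn K n) (z : int) : Prop :=
  exists (lam : K) (alpha : 'I_n -> int),
    [/\ lam != 0, alpha i = z &
        det_is I u (@RC K n lam * \prod_(k in ~: I) @RX K n k ^ alpha k)].

End Det.

(* Main.v *)
Require Import Defs.
From HB Require Import structures.
From mathcomp Require Import all_boot all_order all_algebra.
From mathcomp Require Import fingroup perm.
From mathcomp Require Import zify ring generic_quotient.
Set Implicit Arguments.
Unset Strict Implicit.
Unset Printing Implicit Defensive.
Import Order.TTheory GRing.Theory Num.Theory.
Local Open Scope ring_scope.

Local Open Scope quotient_scope.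

Section Alg.
Variables (K : fieldType) (n : nat).
Local Notation Sn := (Sn K n).
Local Notation mono := (mono n).
Local Notation one := (S1 K n).
Implicit Types (u v w : Sn) (a b : mono).

Lemma mono_mulA : associative (@mono_mul n).
Proof.
move=> a b c; rewrite /mono_mul /=; congr (_, _); apply/ffunP => k; rewrite !ffunE /=; lia.
Qed.

Lemma mono_mul1m a : mono_mul (mono1 n) a = a.
Proof. case: a => a1 a2; rewrite /mono_mul /=; congr (_, _); apply/ffunP => k; rewrite !ffunE /=; lia. Qed.

Lemma mono_mulm1 a : mono_mul a (mono1 n) = a.
Proof. case: a => a1 a2; rewrite /mono_mul /=; congr (_, _); apply/ffunP => k; rewrite !ffunE /=; lia. Qed.

Definition Sint u (F : mono -> K) : K := \sum_(p <- u) p.1 * F p.2.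

Lemma Sint_cat u v F : Sint (u ++ v) F = Sint u F + Sint v F.
Proof. by rewrite /Sint big_cat. Qed.

Lemma Sint_opp u F : Sint (Sopp u) F = - Sint u F.
Proof. by rewrite /Sint big_map -sumrN; apply: eq_bigr => p _; rewrite mulNr. Qed.

Lemma Sint_nil F : Sint [::] F = 0.
Proof. by rewrite /Sint big_nil. Qed.

Lemma Sint_S1 F : Sint one F = F (mono1 n).
Proof. by rewrite /Sint big_seq1 mul1r. Qed.

Lemma Sint_mul u v F :
  Sint (Smul u v) F = Sint u (fun a => Sint v (fun b => F (mono_mul a b))).
Proof.
rewrite /Sint /Smul big_allpairs_dep /=; apply: eq_bigr => p _.
by rewrite big_distrr /=; apply: eq_bigr => q _; rewrite mulrA.
Qed.

Lemma Sint_add_fun u F G : Sint u (fun a => F a + G a) = Sint u F + Sint u G.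
Proof. by rewrite /Sint -big_split; apply: eq_bigr => p _; rewrite mulrDr. Qed.

Lemma Sint_opp_fun u F : Sint u (fun a => - F a) = - Sint u F.
Proof. by rewrite /Sint -sumrN; apply: eq_bigr => p _; rewrite mulrN. Qed.

Lemma Sint_scal u F (c : K) : Sint u (fun a => c * F a) = c * Sint u F.
Proof. by rewrite /Sint big_distrr; apply: eq_bigr => p _; rewrite mulrCA. Qed.

Lemma Sint_eq u F G : (forall a, F a = G a) -> Sint u F = Sint u G.
Proof. by move=> FG; apply: eq_bigr => p _; rewrite FG. Qed.

Lemma Scoef_Sint u m : Scoef u m = Sint u (fun a => (a == m)%:R).
Proof.
rewrite /Scoef /Sint big_mkcond; apply: eq_bigr => p _.
by case: eqP => _; rewrite ?mulr1 ?mulr0.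
Qed.

Lemma Sint_supp u (S : seq mono) F : uniq S -> {subset map snd u <= S} ->
  Sint u F = \sum_(m <- S) Scoef u m * F m.
Proof.
move=> uS sub.
under eq_bigr => m _ do rewrite Scoef_Sint mulrC -Sint_scal.
rewrite /Sint exchange_big /= [LHS]big_seq [RHS]big_seq; apply: eq_bigr => p pu.
rewrite -big_distrr /=; congr (_ * _).
have pS : p.2 \in S.
  by apply: sub; apply/mapP; exists p.
rewrite (bigID (fun m => m == p.2)) /= [X in _ + X]big1 ?addr0; last first.
  by move=> m /negbTE; rewrite eq_sym => ->; rewrite mulr0.
rewrite -big_filter.
have -> : [seq i <- S | i == p.2] = [:: p.2].
  by rewrite (@eq_filter _ _ (pred1 p.2)) // filter_pred1_uniq.
by rewrite big_seq1 eqxx mulr1.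
Qed.

Lemma Sint_Seq u v F : Seq u v -> Sint u F = Sint v F.
Proof.
move=> e; set S := undup (map snd (u ++ v)).
have uS : uniq S by apply: undup_uniq.
rewrite (@Sint_supp u S) // ?(@Sint_supp v S) //.
- by apply: eq_bigr => m _; rewrite e.
- by move=> m mv; rewrite mem_undup map_cat mem_cat mv orbT.
- by move=> m mu; rewrite mem_undup map_cat mem_cat mu.
Qed.

Lemma SeqP u v : Seq u v <-> (forall F, Sint u F = Sint v F).
Proof.
split; first by move=> e F; apply: Sint_Seq.
by move=> h m; rewrite !Scoef_Sint h.
Qed.


Definition Seqb u v : bool :=
  all (fun m => Scoef u m == Scoef v m) (map snd (u ++ v)).

Lemma Scoef_out u m : m \notin map snd u -> Scoef u m = 0.
Proof.
move=> mu; rewrite /Scoef big_hasC //; apply/hasP => -[p pu /eqP pm].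
by move: mu; rewrite -pm; case/negP; apply/mapP; exists p.
Qed.

Lemma SeqbP u v : reflect (Seq u v) (Seqb u v).
Proof.
apply: (iffP allP) => [h m|e m _]; last by rewrite e.
case: (boolP (m \in map snd (u ++ v))) => [mi|mi]; first by apply/eqP/h.
rewrite !Scoef_out //; apply: contra mi; rewrite map_cat mem_cat => ->;
  rewrite ?orbT //.
Qed.

Lemma Seq_refl u : Seq u u. Proof. by []. Qed.
Lemma Seq_sym u v : Seq u v -> Seq v u. Proof. by move=> e m; rewrite e. Qed.
Lemma Seq_trans u v w : Seq u v -> Seq v w -> Seq u w.
Proof. by move=> e1 e2 m; rewrite e1 e2. Qed.

Lemma Seqb_refl : reflexive Seqb. Proof. by move=> u; apply/SeqbP. Qed.
Lemma Seqb_sym : symmetric Seqb.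
Proof. by move=> u v; apply/SeqbP/SeqbP; apply: Seq_sym. Qed.
Lemma Seqb_trans : transitive Seqb.
Proof. by move=> v u w /SeqbP e1 /SeqbP e2; apply/SeqbP; apply: Seq_trans e2. Qed.

Canonical Seq_equiv := EquivRel Seqb Seqb_refl Seqb_sym Seqb_trans.
Definition Q := {eq_quot Seqb}.
HB.instance Definition _ : EqQuotient _ Seqb Q := EqQuotient.on Q.
HB.instance Definition _ := Choice.on Q.

Definition piQ (u : Sn) : Q := \pi_Q u.

Lemma piQ_eq u v : piQ u = piQ v <-> Seq u v.
Proof. by split => [/eqmodP/SeqbP|/SeqbP/eqmodP]. Qed.

Lemma reprQ (x : Q) : piQ (repr x) = x.
Proof. exact: reprK. Qed.

Lemma repr_pi u : Seq (repr (piQ u)) u.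
Proof. by apply/piQ_eq; rewrite reprQ. Qed.

Lemma Sint_repr u F : Sint (repr (piQ u)) F = Sint u F.
Proof. exact/Sint_Seq/repr_pi. Qed.

Definition zeroQ : Q := piQ [::].
Definition oneQ : Q := piQ one.
Definition addQ (x y : Q) : Q := piQ (Sadd (repr x) (repr y)).
Definition oppQ (x : Q) : Q := piQ (Sopp (repr x)).
Definition mulQ (x y : Q) : Q := piQ (Smul (repr x) (repr y)).

Lemma addQ_pi u v : addQ (piQ u) (piQ v) = piQ (Sadd u v).
Proof. by apply/piQ_eq/SeqP => F; rewrite !Sint_cat !Sint_repr. Qed.
Lemma oppQ_pi u : oppQ (piQ u) = piQ (Sopp u).
Proof. by apply/piQ_eq/SeqP => F; rewrite !Sint_opp !Sint_repr. Qed.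
Lemma mulQ_pi u v : mulQ (piQ u) (piQ v) = piQ (Smul u v).
Proof.
apply/piQ_eq/SeqP => F; rewrite !Sint_mul Sint_repr.
by apply: Sint_eq => a; rewrite Sint_repr.
Qed.

Ltac qelim x := rewrite -[x]reprQ; move: (repr x) => {x}.

Lemma addQA : associative addQ.
Proof.
move=> x y z; qelim x => x; qelim y => y; qelim z => z.
by rewrite !addQ_pi; apply/piQ_eq/SeqP => F; rewrite !Sint_cat addrA.
Qed.
Lemma addQC : commutative addQ.
Proof.
move=> x y; qelim x => x; qelim y => y.
by rewrite !addQ_pi; apply/piQ_eq/SeqP => F; rewrite !Sint_cat addrC.
Qed.
Lemma add0Q : left_id zeroQ addQ.
Proof.
move=> x; qelim x => x.
by rewrite !addQ_pi; apply/piQ_eq/SeqP => F; rewrite !Sint_cat Sint_nil add0r.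
Qed.
Lemma addNQ : left_inverse zeroQ oppQ addQ.
Proof.
move=> x; qelim x => x.
by rewrite oppQ_pi !addQ_pi; apply/piQ_eq/SeqP => F; rewrite !Sint_cat Sint_opp Sint_nil addNr.
Qed.
Lemma mulQA : associative mulQ.
Proof.
move=> x y z; qelim x => x; qelim y => y; qelim z => z.
rewrite !mulQ_pi; apply/piQ_eq/SeqP => F; rewrite !Sint_mul.
apply: Sint_eq => a; rewrite Sint_mul; apply: Sint_eq => b.
by apply: Sint_eq => c; rewrite mono_mulA.
Qed.
Lemma mul1Q : left_id oneQ mulQ.
Proof.
move=> x; qelim x => x.
rewrite !mulQ_pi; apply/piQ_eq/SeqP => F; rewrite !Sint_mul Sint_S1.
by apply: Sint_eq => a; rewrite mono_mul1m.
Qed.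
Lemma mulQ1 : right_id oneQ mulQ.
Proof.
move=> x; qelim x => x.
rewrite !mulQ_pi; apply/piQ_eq/SeqP => F; rewrite !Sint_mul.
by apply: Sint_eq => a; rewrite Sint_S1 mono_mulm1.
Qed.
Lemma mulQDl : left_distributive mulQ addQ.
Proof.
move=> x y z; qelim x => x; qelim y => y; qelim z => z.
rewrite ?mulQ_pi ?addQ_pi ?mulQ_pi ?addQ_pi; apply/piQ_eq/SeqP => F.
by rewrite !(Sint_mul, Sint_cat, Sint_repr).
Qed.
Lemma mulQDr : right_distributive mulQ addQ.
Proof.
move=> x y z; qelim x => x; qelim y => y; qelim z => z.
rewrite ?mulQ_pi ?addQ_pi ?mulQ_pi ?addQ_pi; apply/piQ_eq/SeqP => F.
rewrite !(Sint_mul, Sint_cat, Sint_repr) -Sint_add_fun.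
by apply: Sint_eq => a; rewrite !(Sint_cat, Sint_repr).
Qed.

HB.instance Definition _ := GRing.isPzRing.Build Q addQA addQC add0Q addNQ
  mulQA mul1Q mulQ1 mulQDl mulQDr.

Lemma piQD u v : piQ (Sadd u v) = piQ u + piQ v.
Proof. by rewrite -addQ_pi. Qed.
Lemma piQN u : piQ (Sopp u) = - piQ u.
Proof. by rewrite -oppQ_pi. Qed.
Lemma piQM u v : piQ (Smul u v) = piQ u * piQ v.
Proof. by rewrite -mulQ_pi. Qed.
Lemma piQ1 : piQ one = 1.
Proof. by []. Qed.
Lemma piQ0 : piQ [::] = 0.
Proof. by []. Qed.
Lemma piQB u v : piQ (Ssub u v) = piQ u - piQ v.
Proof. by rewrite /Ssub piQD piQN. Qed.
Lemma piQ_prod (s : seq Sn) : piQ (Sprod s) = \prod_(x <- s) piQ x.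
Proof. by elim: s => [|x s IH]; rewrite ?big_nil ?big_cons //= piQM IH. Qed.
Lemma piQ_sum (s : seq Sn) : piQ (Ssum s) = \sum_(x <- s) piQ x.
Proof. by elim: s => [|x s IH]; rewrite ?big_nil ?big_cons //= piQD IH. Qed.

End Alg.


Section AbsRing.
Variable R : pzRingType.

Lemma pq_lem (p q : R) : p + q + p * q = (1 + p) * (1 + q) - 1.
Proof.
apply/eqP; rewrite eq_sym subr_eq; apply/eqP.
rewrite mulrDl mul1r mulrDr mulr1.
rewrite [RHS]addrC !addrA; congr (_ + _); rewrite addrAC.
done.
Qed.

Lemma idem_mul (e p q : R) : GRing.comm e p -> GRing.comm e q -> e * e = e ->
  (1 + p * e) * (1 + q * e) = 1 + (p + q + p * q) * e.
Proof.
move=> cp cq ee.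
rewrite mulrDl mul1r mulrDr mulr1 -addrA; congr (_ + _).
rewrite !mulrDl -[p * e * (q * e)]mulrA [e * (q * e)]mulrA cq -mulrA ee mulrA.
by rewrite addrA [q * e + _]addrC.
Qed.

Lemma inv_lemma (X Y U V EP EQ Em Ej : R) :
  Y * X = 1 -> V * U = 1 ->
  GRing.comm EP X -> GRing.comm EP Y -> GRing.comm EQ U -> GRing.comm EQ V ->
  EP * EP = EP -> EQ * EQ = EQ ->
  Em = 1 - X * Y -> Ej = 1 - U * V -> Em * EP = Ej * EQ ->
  GRing.comm EP Em -> GRing.comm EQ Ej ->
  ((1 + (Y - 1) * EP) * (1 + (U - 1) * EQ)) *
    ((1 + (V - 1) * EQ) * (1 + (X - 1) * EP)) = 1 /\
  ((1 + (V - 1) * EQ) * (1 + (X - 1) * EP)) *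
    ((1 + (Y - 1) * EP) * (1 + (U - 1) * EQ)) = 1.
Proof.
move=> YX VU cPX cPY cQU cQV PP QQ eEm eEj eJ cPm cQj.
have cB (e a : R) : GRing.comm e a -> GRing.comm e (a - 1).
  by move=> h; apply: commrB => //; apply: commr1.
have oB (a : R) : 1 + (a - 1) = a by rewrite addrC subrK.
have prod0 (A B C : R) : A * B = 1 -> 1 + (A - 1 + (B - 1) + (A - 1) * (B - 1)) * C = 1.
  by move=> h; rewrite pq_lem !oB h subrr mul0r addr0.
have aa' : (1 + (Y - 1) * EP) * (1 + (X - 1) * EP) = 1.
  rewrite idem_mul; [|exact: cB|exact: cB|done].
  by rewrite prod0.
have b'b : (1 + (V - 1) * EQ) * (1 + (U - 1) * EQ) = 1.
  rewrite idem_mul; [|exact: cB|exact: cB|done].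
  by rewrite prod0.
have a'a : (1 + (X - 1) * EP) * (1 + (Y - 1) * EP) = 1 - Em * EP.
  rewrite idem_mul; [|exact: cB|exact: cB|done].
  by rewrite pq_lem !oB eEm -opprB mulNr.
have bb' : (1 + (U - 1) * EQ) * (1 + (V - 1) * EQ) = 1 - Em * EP.
  rewrite idem_mul; [|exact: cB|exact: cB|done].
  by rewrite pq_lem !oB eJ eEj -opprB mulNr.
have YEm : (Y - 1) * Em = - Em.
  by rewrite mulrBl mul1r eEm mulrBr mulr1 mulrA YX mul1r subrr add0r.
have EjU : Ej * (U - 1) = - Ej.
  by rewrite mulrBr mulr1 eEj mulrBl mul1r -mulrA VU mulr1 subrr add0r.
have aJ : (1 + (Y - 1) * EP) * (Em * EP) = 0.
  rewrite mulrDl mul1r -mulrA [EP * (Em * EP)]mulrA cPm -mulrA PP mulrA YEm.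
  by rewrite mulNr subrr.
have Jb : (Em * EP) * (1 + (U - 1) * EQ) = 0.
  rewrite eJ mulrDr mulr1 mulrA -[Ej * EQ * (U - 1)]mulrA (cB _ _ cQU).
  by rewrite mulrA EjU -mulrA QQ mulNr subrr.
split.
  rewrite -mulrA [(1 + (U - 1) * EQ) * _]mulrA bb' [(1 - Em * EP) * _]mulrBl mul1r.
  by rewrite mulrBr mulrA aJ mul0r subr0 aa'.
rewrite -mulrA [(1 + (X - 1) * EP) * _]mulrA a'a [(1 - Em * EP) * _]mulrBl mul1r.
by rewrite Jb subr0 b'b.
Qed.

Lemma comm_prod (I : Type) (c : R) (f : I -> R) (s : seq I) :
  (forall a, GRing.comm c (f a)) -> GRing.comm c (\prod_(x <- s) f x).
Proof.
move=> h; elim: s => [|a s IH]; first by rewrite big_nil; apply: commr1.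
by rewrite big_cons; apply: commrM.
Qed.

Lemma comm_prod_in (I : eqType) (c : R) (f : I -> R) (s : seq I) :
  (forall a, a \in s -> GRing.comm c (f a)) -> GRing.comm c (\prod_(x <- s) f x).
Proof.
move=> h; rewrite big_seq; apply: (big_ind (GRing.comm c)).
- exact: commr1.
- by move=> x y; apply: commrM.
- by move=> a /h.
Qed.

Lemma prod_perm_comm (I : eqType) (f : I -> R) (s t : seq I) :
  (forall a b, GRing.comm (f a) (f b)) -> perm_eq s t ->
  \prod_(x <- s) f x = \prod_(x <- t) f x.
Proof.
move=> cf; elim: s t => [|a s IH] t pst.
  by move: pst; rewrite perm_sym => /perm_nilP ->.
have at_ : a \in t by rewrite -(perm_mem pst) mem_head.
case/splitPr: at_ pst => t1 t2 pst.
have h : perm_eq s (t1 ++ t2).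
  rewrite -(perm_cons a); apply: (perm_trans pst).
  by rewrite -cat1s perm_catCA.
rewrite big_cons (IH _ h) !big_cat big_cons /= !mulrA; congr (_ * _).
by apply: comm_prod.
Qed.

Lemma prod_idem (I : Type) (f : I -> R) (s : seq I) :
  (forall a b, GRing.comm (f a) (f b)) -> (forall a, f a * f a = f a) ->
  (\prod_(x <- s) f x) * (\prod_(x <- s) f x) = \prod_(x <- s) f x.
Proof.
move=> cf ff; elim: s => [|a s IH]; first by rewrite big_nil mulr1.
rewrite big_cons -mulrA [(\prod_(x <- s) f x) * _]mulrA.
have -> : (\prod_(x <- s) f x) * f a = f a * (\prod_(x <- s) f x).
  by apply/esym/comm_prod.
by rewrite -mulrA IH mulrA ff.
Qed.
End AbsRing.


Local Open Scope quotient_scope.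

Section Gen.
Variables (K : fieldType) (n : nat).
Local Notation Sn := (Sn K n).
Local Notation mono := (mono n).
Local Notation one := (S1 K n).
Local Notation Q := (Q K n).
Local Notation piQ := (@piQ K n).

Definition Xq (k : 'I_n) : Q := piQ (Sx K k).
Definition Yq (k : 'I_n) : Q := piQ (Sy K k).
Definition Eqk (k : 'I_n) : Q := piQ (Se K k).
Definition EIq (P : {set 'I_n}) : Q := piQ (SeI K P).

Lemma piQ_single_mul (c d : K) (a b : mono) :
  piQ [:: (c, a)] * piQ [:: (d, b)] = piQ [:: (c * d, mono_mul a b)].
Proof. by rewrite -piQM. Qed.

Lemma YXq k : Yq k * Xq k = 1.
Proof.
rewrite /Yq /Xq /Sx /Sy piQ_single_mul mulr1 -piQ1; congr (piQ [:: (1, _)]).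
by rewrite /mono_mul /mono1 /=; congr (_, _); apply/ffunP => l; rewrite !ffunE /=; lia.
Qed.

Lemma mono_comm (a b : mono) :
  (forall i, ((a.1 i == 0%N) && (a.2 i == 0%N)) || ((b.1 i == 0%N) && (b.2 i == 0%N))) ->
  mono_mul a b = mono_mul b a.
Proof.
move=> h; rewrite /mono_mul; congr (_, _); apply/ffunP => i; rewrite !ffunE;
  move: (h i); case/orP => /andP [/eqP -> /eqP ->]; lia.
Qed.

Lemma comm_single (a b : mono) :
  (forall i, ((a.1 i == 0%N) && (a.2 i == 0%N)) || ((b.1 i == 0%N) && (b.2 i == 0%N))) ->
  GRing.comm (piQ [:: (1, a)]) (piQ [:: (1, b)]).
Proof. by move=> h; rewrite /GRing.comm !piQ_single_mul mono_comm. Qed.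

Lemma commXY k l : k != l ->
  [/\ GRing.comm (Xq k) (Xq l), GRing.comm (Xq k) (Yq l),
      GRing.comm (Yq k) (Xq l) & GRing.comm (Yq k) (Yq l)].
Proof.
move=> kl; split; apply: comm_single => i /=; rewrite !ffunE /=;
  by case: (i =P k) => [->|]; rewrite ?(negbTE kl) ?eqxx //= ?orbT.
Qed.

Lemma EqE k : Eqk k = 1 - Xq k * Yq k.
Proof. by rewrite /Eqk /Se piQB piQM. Qed.

Lemma comm_XE k l : k != l -> GRing.comm (Xq l) (Eqk k) /\ GRing.comm (Yq l) (Eqk k).
Proof.
move=> kl; rewrite EqE; have [a b c d] := commXY kl.
split; apply: commrB; try apply: commr1; apply: commrM.
- exact: (commr_sym a).
- exact: (commr_sym c).
- exact: (commr_sym b).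
- exact: (commr_sym d).
Qed.

Lemma comm_EE k l : GRing.comm (Eqk k) (Eqk l).
Proof.
case: (eqVneq k l) => [->|kl]; first exact: commr_refl.
have lk : l != k by rewrite eq_sym.
have [a b] := comm_XE lk.
rewrite [Eqk k]EqE; apply: commr_sym; apply: commrB; first exact: commr1.
exact: (commrM (commr_sym a) (commr_sym b)).
Qed.

Lemma EE k : Eqk k * Eqk k = Eqk k.
Proof.
rewrite EqE mulrBl mul1r mulrBr mulr1 -mulrA [Yq k * (Xq k * Yq k)]mulrA YXq mul1r.
by rewrite subrr subr0.
Qed.

Lemma YE k : Yq k * Eqk k = 0.
Proof. by rewrite EqE mulrBr mulr1 mulrA YXq mul1r subrr. Qed.

Lemma EIqE P : EIq P = \prod_(k <- enum P) Eqk k.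
Proof. by rewrite /EIq /SeI piQ_prod big_map. Qed.

Lemma EIq_idem P : EIq P * EIq P = EIq P.
Proof. rewrite EIqE; apply: prod_idem => [a b|a]; [exact: comm_EE|exact: EE]. Qed.

Lemma EIq_comm (P : {set 'I_n}) (m : 'I_n) : m \notin P ->
  GRing.comm (EIq P) (Xq m) /\ GRing.comm (EIq P) (Yq m).
Proof.
move=> mP; rewrite EIqE; split; apply: commr_sym; apply: comm_prod_in => k;
  rewrite mem_enum => kP; have km : k != m by apply: contraNneq mP => <-.
- by case: (comm_XE km).
- by case: (comm_XE km).
Qed.

Lemma EIq_commE P k : GRing.comm (EIq P) (Eqk k).
Proof. rewrite EIqE; apply: commr_sym; apply: comm_prod => a; exact: comm_EE. Qed.

Lemma EIq_split (J : {set 'I_n}) (m : 'I_n) : m \in J -> EIq J = Eqk m * EIq (J :\ m).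
Proof.
move=> mJ.
have pe : perm_eq (enum J) (m :: enum (J :\ m)).
  apply: uniq_perm; first exact: enum_uniq.
    by rewrite /= enum_uniq mem_enum setD11.
  move=> x; rewrite in_cons !mem_enum in_setD1; case: (x =P m) => [->|] //=.
by rewrite !EIqE (prod_perm_comm (f := @Eqk) (@comm_EE) pe) big_cons.
Qed.


Lemma piQ_theta (m j : 'I_n) (J : {set 'I_n}) : piQ (theta K m j J) =
  (1 + (Yq m - 1) * EIq (J :\ m)) * (1 + (Xq j - 1) * EIq (J :\ j)).
Proof.
have e1 : piQ (Smul (Ssub (Sy K m) one) (SeI K (J :\ m))) = (Yq m - 1) * EIq (J :\ m).
  by rewrite piQM piQB.
have e2 : piQ (Smul (Ssub (Sx K j) one) (SeI K (J :\ j))) = (Xq j - 1) * EIq (J :\ j).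
  by rewrite piQM piQB.
by rewrite /theta piQM (piQD one (Smul (Ssub (Sy K m) one) _))
  (piQD one (Smul (Ssub (Sx K j) one) _)) e1 e2.
Qed.

Lemma piQ_fac (u : Sn) (P : {set 'I_n}) :
  piQ (Sadd one (Smul (Ssub u one) (SeI K P))) = 1 + (piQ u - 1) * EIq P.
Proof. by rewrite (piQD one) (piQM (Ssub u one)) (piQB u one). Qed.

Lemma prod_zip_ones (l : seq 'I_n) :
  \prod_(k <- zip l (nseq (size l) one)) piQ (Smul (Se K k.1) k.2) =
  \prod_(k <- l) Eqk k.
Proof.
elim: l => [|a l IH]; first by rewrite !big_nil.
by rewrite /= !big_cons IH (piQM (Se K a) one) piQ1 mulr1.
Qed.

Lemma piQ_pword (P : {set 'I_n}) (a0 : Sn) (s : nat) : #|P| = s ->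
  piQ (pword P a0 (nseq s one)) = piQ a0 * EIq P.
Proof.
move=> cP; rewrite /pword (piQM a0) piQ_prod big_map -cP cardE prod_zip_ones.
by rewrite EIqE.
Qed.

Lemma units_theta (s : nat) (m j : 'I_n) (J : {set 'I_n}) :
  m \in J -> j \in J -> m != j -> #|J| = s.+1 ->
  in_units_1a s (theta K m j J).
Proof.
move=> mJ jJ mj cJ.
set P := J :\ m; set Q' := J :\ j.
have cP : #|P| = s by move: cJ; rewrite (cardsD1 m J) mJ => -[].
have cQ : #|Q'| = s by move: cJ; rewrite (cardsD1 j J) jJ => -[].
have eY : piQ (Ssub (Sy K m) one) = Yq m - 1 by rewrite piQB.
have eX : piQ (Ssub (Sx K j) one) = Xq j - 1 by rewrite piQB.
split.
  exists [:: (P, Ssub (Sy K m) one, nseq s one);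
            (Q', Ssub (Sx K j) one, nseq s one);
            (Q', Smul (Smul (Ssub (Sy K m) one) (SeI K P)) (Ssub (Sx K j) one),
             nseq s one)].
  split.
    by move=> t; rewrite !inE => /or3P [] /eqP -> /=; rewrite size_nseq.
  apply/piQ_eq; rewrite (piQB (theta K m j J)) piQ_theta piQ_sum big_map.
  rewrite !big_cons big_nil /= !piQ_pword //.
  rewrite (piQM (Smul (Ssub (Sy K m) one) (SeI K P))) (piQM (Ssub (Sy K m) one)) eY eX.
  rewrite -/(EIq P) addr0.
  set A := (Yq m - 1) * EIq P; set B := (Xq j - 1) * EIq Q'.
  rewrite mulrDl mul1r mulrDr mulr1 -mulrA -/B.
  by rewrite piQ1 addrAC [1 + B]addrC addrK addrCA.
exists (Smul (Sadd one (Smul (Ssub (Sy K j) one) (SeI K Q')))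
             (Sadd one (Smul (Ssub (Sx K m) one) (SeI K P)))).
have jQ : j \notin Q' by rewrite setD11.
have mP : m \notin P by rewrite setD11.
have [cPX cPY] := EIq_comm mP.
have [cQU cQV] := EIq_comm jQ.
have eJ : Eqk m * EIq P = Eqk j * EIq Q' by rewrite /P /Q' -!EIq_split.
have [h1 h2] := @inv_lemma _ (Xq m) (Yq m) (Xq j) (Yq j) (EIq P) (EIq Q') (Eqk m) (Eqk j)
  (YXq m) (YXq j) cPX cPY cQU cQV (EIq_idem P) (EIq_idem Q') (EqE m) (EqE j) eJ
  (EIq_commE _ _) (EIq_commE _ _).
have ev : piQ (Smul (Sadd one (Smul (Ssub (Sy K j) one) (SeI K Q')))
             (Sadd one (Smul (Ssub (Sx K m) one) (SeI K P)))) =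
  (1 + (Yq j - 1) * EIq Q') * (1 + (Xq m - 1) * EIq P).
  by rewrite piQM !piQ_fac.
split; apply/piQ_eq; rewrite piQM ev piQ_theta piQ1 //.
Qed.

End Gen.

Lemma Pcst_mul (K : fieldType) (n : nat) (a b : K) :
  Pcst n (a * b) = Pcst n a * Pcst n b.
Proof. by elim: n => [|n IH] //=; rewrite IH polyCM. Qed.
Lemma Pcst_opp (K : fieldType) (n : nat) (a : K) : Pcst n (- a) = - Pcst n a.
Proof. by elim: n => [|n IH] //=; rewrite IH polyCN. Qed.
Lemma Pcst_one (K : fieldType) (n : nat) : Pcst n (1 : K) = 1.
Proof. by elim: n => [|n IH] //=; rewrite IH. Qed.

Lemma Pvar_neq0 (K : fieldType) (n k : nat) : (k < n)%N -> Pvar K n k != 0.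
Proof.
elim: n => [|n IH] //= kn; case: ifP => [_|/negbT kn'].
  by rewrite -size_poly_eq0 size_polyX.
by rewrite polyC_eq0 IH //; move: kn kn'; lia.
Qed.

Section Mat.
Variables (K : fieldType) (n : nat) (I : {set 'I_n}).
Local Notation Sn := (Sn K n).
Local Notation mono := (mono n).
Local Notation one := (S1 K n).
Local Notation RC := (@RC K n).
Local Notation RX := (@RX K n).
Local Notation F := (Ratf K n).
Implicit Types (u v : Sn) (a b : mono) (g h : 'I_n -> nat).

Lemma RCM (a b : K) : RC (a * b) = RC a * RC b.
Proof. by rewrite /Defs.RC Pcst_mul tofracM. Qed.
Lemma RCN (a : K) : RC (- a) = - RC a.
Proof. by rewrite /Defs.RC Pcst_opp tofracN. Qed.
Lemma RC1 : RC 1 = 1.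
Proof. by rewrite /Defs.RC Pcst_one. Qed.
Lemma RX_neq0 k : RX k != 0.
Proof. by rewrite /Defs.RX tofrac_eq0 Pvar_neq0. Qed.

Definition phi (a : mono) (g h : 'I_n -> nat) : F :=
  if [forall i in I, (a.2 i <= h i)%N && (g i == h i - a.2 i + a.1 i)%N]
  then \prod_(k in ~: I) RX k ^ ((a.1 k)%:Z - (a.2 k)%:Z) else 0.

Lemma MentryE u g h : Mentry I u g h = \sum_(p <- u) RC p.1 * phi p.2 g h.
Proof. by apply: eq_bigr => p _; rewrite /phi; case: ifP; rewrite ?mulr0. Qed.


Definition kk (b : mono) (h : 'I_n -> nat) : {ffun 'I_n -> nat} :=
  [ffun i => if i \in I then (h i - b.2 i + b.1 i)%N else 0%N].

Lemma phi_mul a b g h :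
  phi (mono_mul a b) g h = phi a g (kk b h) * phi b (kk b h) h.
Proof.
rewrite /phi.
case cb: [forall i in I, (b.2 i <= h i)%N].
  have -> : [forall i in I, (b.2 i <= h i)%N && (kk b h i == h i - b.2 i + b.1 i)%N].
    apply/forall_inP => i iI; rewrite ffunE iI eqxx andbT; exact: (forall_inP cb).
  have -> : [forall i in I, ((mono_mul a b).2 i <= h i)%N &&
        (g i == h i - (mono_mul a b).2 i + (mono_mul a b).1 i)%N] =
      [forall i in I, (a.2 i <= kk b h i)%N && (g i == kk b h i - a.2 i + a.1 i)%N].
    apply: eq_forallb_in => i iI; rewrite /mono_mul /= !ffunE iI.
    have := forall_inP cb i iI => hb.
    by apply/andP/andP => -[h1 /eqP h2]; split; try apply/eqP; lia.
  case: ifP => _; last by rewrite mul0r.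
  rewrite -big_split; apply: eq_bigr => k _ /=; rewrite -expfzDr ?RX_neq0 //.
  by congr (_ ^ _); rewrite /mono_mul /= !ffunE; lia.
have -> : [forall i in I, (b.2 i <= h i)%N && (kk b h i == h i - b.2 i + b.1 i)%N] = false.
  apply/negbTE; move: cb; apply: contraFN => /forall_inP H; apply/forall_inP => i iI.
  by case/andP: (H i iI).
have -> : [forall i in I, ((mono_mul a b).2 i <= h i)%N &&
        (g i == h i - (mono_mul a b).2 i + (mono_mul a b).1 i)%N] = false.
  apply/negbTE; move: cb; apply: contraFN => /forall_inP H; apply/forall_inP => i iI.
  case/andP: (H i iI); rewrite /mono_mul /= !ffunE => hh _; lia.
by rewrite mulr0.
Qed.


Lemma phi_ext a g g' h h' : (forall i, i \in I -> g i = g' i) ->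
  (forall i, i \in I -> h i = h' i) -> phi a g h = phi a g' h'.
Proof.
move=> eg eh; rewrite /phi; congr (if _ then _ else _).
by apply: eq_forallb_in => i iI; rewrite eg ?eh.
Qed.

Lemma Mentry_ext u g g' h h' : (forall i, i \in I -> g i = g' i) ->
  (forall i, i \in I -> h i = h' i) -> Mentry I u g h = Mentry I u g' h'.
Proof.
by move=> eg eh; rewrite !MentryE; apply: eq_bigr => p _; rewrite (phi_ext _ eg eh).
Qed.

Definition canon (x : {ffun 'I_n -> nat}) := forall i, i \notin I -> x i = 0%N.

Lemma canon_kk b h : canon (kk b h).
Proof. by move=> i iI; rewrite ffunE (negbTE iI). Qed.

Lemma phi_key b (x : {ffun 'I_n -> nat}) h : canon x -> phi b x h != 0 -> x = kk b h.
Proof.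
move=> cx; rewrite /phi; case: ifP => [/forall_inP H _|]; last by rewrite eqxx.
apply/ffunP => i; rewrite ffunE; case: ifP => iI.
  by case/andP: (H i iI) => _ /eqP.
by rewrite cx ?iI.
Qed.

Lemma group_sum (T U : eqType) (s : seq T) (f : T -> U) (S : seq U)
  (Fn : U -> F) (G : T -> F) : uniq S -> (forall x, x \in s -> f x \in S) ->
  \sum_(x <- s) Fn (f x) * G x = \sum_(y <- S) Fn y * \sum_(x <- s | f x == y) G x.
Proof.
move=> uS sS.
have e : forall y, Fn y * \sum_(x <- s | f x == y) G x =
    \sum_(x <- s) (if f x == y then Fn (f x) * G x else 0).
  move=> y; rewrite big_distrr big_mkcond /=; apply: eq_bigr => x _.
  by case: eqP => [->|]; rewrite ?mulr0.
rewrite (eq_bigr _ (fun y _ => e y)) exchange_big /= [LHS]big_seq [RHS]big_seq.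
apply: eq_bigr => x xs; rewrite -big_mkcond /= -big_filter.
have -> : [seq y <- S | f x == y] = [:: f x].
  by rewrite (@eq_filter _ _ (pred1 (f x))) ?filter_pred1_uniq ?sS // => y; rewrite /= eq_sym.
by rewrite big_seq1.
Qed.

Lemma Mentry_mul u v g h :
  (forall x : 'I_n -> nat, ~~ [forall i in I, x i == h i] -> Mentry I v x h = 0) ->
  Mentry I (Smul u v) g h = Mentry I u g h * Mentry I v h h.
Proof.
move=> off.
set hc : {ffun 'I_n -> nat} := [ffun i => if i \in I then h i else 0%N].
have chc : canon hc by move=> i iI; rewrite ffunE (negbTE iI).
have step1 : Mentry I (Smul u v) g h =
    \sum_(q <- v) Mentry I u g (kk q.2 h) * (RC q.1 * phi q.2 (kk q.2 h) h).
  rewrite MentryE /Smul big_allpairs_dep /= exchange_big /=; apply: eq_bigr => q _.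
  rewrite MentryE big_distrl /=; apply: eq_bigr => p _.
  by rewrite RCM phi_mul; ring.
set S := undup (hc :: map (fun q => kk q.2 h) v).
have uS : uniq S by apply: undup_uniq.
have cS : forall y, y \in S -> canon y.
  move=> y; rewrite mem_undup in_cons => /orP [/eqP ->|/mapP [q _ ->]] //.
  exact: canon_kk.
rewrite step1 (@group_sum _ _ v (fun q => kk q.2 h) S (fun y => Mentry I u g y)
  (fun q => RC q.1 * phi q.2 (kk q.2 h) h)) //; last first.
  by move=> q qv; rewrite mem_undup in_cons; apply/orP; right; apply/mapP; exists q.
have e2 : forall y, y \in S ->
    \sum_(q <- v | kk q.2 h == y) RC q.1 * phi q.2 (kk q.2 h) h = Mentry I v y h.
  move=> y yS; rewrite MentryE big_mkcond /=; apply: eq_bigr => q _.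
  case: eqP => [<-//|ne].
  case: (eqVneq (phi q.2 y h) 0) => [->|nz]; first by rewrite mulr0.
  by case: ne; rewrite (phi_key (cS y yS) nz).
rewrite big_seq (eq_bigr _ (fun y yS => congr1 _ (e2 y yS))) -big_seq.
have hS : hc \in S by rewrite mem_undup mem_head.
rewrite (bigD1_seq hc) //= big1_seq ?addr0; last first.
  move=> y /andP [yh yS]; rewrite off ?mulr0 //; apply: contra yh => /forall_inP H.
  apply/eqP/ffunP => i; rewrite ffunE; case: ifP => iI; first by apply/eqP/H.
  by rewrite (cS y yS) ?iI.
have ehc : forall i, i \in I -> hc i = h i by move=> i iI; rewrite ffunE iI.
by rewrite (@Mentry_ext u g g hc h) // (@Mentry_ext v hc h h h).
Qed.


Definition diagD u (D : ('I_n -> nat) -> F) :=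
  forall g h, Mentry I u g h = if [forall i in I, g i == h i] then D h else 0.

Lemma diag_eq u D D' : diagD u D -> (forall h, D h = D' h) -> diagD u D'.
Proof. by move=> d e g h; rewrite d e. Qed.

Lemma forall_refl h : [forall i in I, h i == h i].
Proof. by apply/forall_inP => i _. Qed.

Lemma diag_cat u v Du Dv : diagD u Du -> diagD v Dv ->
  diagD (u ++ v) (fun h => Du h + Dv h).
Proof.
move=> du dv g h; rewrite MentryE big_cat -!MentryE du dv.
by rewrite /=; case: ifP; rewrite ?addr0.
Qed.

Lemma diag_opp u Du : diagD u Du -> diagD (Sopp u) (fun h => - Du h).
Proof.
move=> du g h; rewrite MentryE big_map /=.
under eq_bigr => p _ do rewrite RCN mulNr.
by rewrite sumrN -MentryE du; case: ifP; rewrite ?oppr0.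
Qed.

Lemma diag_mul u v Du Dv : diagD u Du -> diagD v Dv ->
  diagD (Smul u v) (fun h => Du h * Dv h).
Proof.
move=> du dv g h; rewrite Mentry_mul; last by move=> x /negbTE nx; rewrite dv nx.
by rewrite du dv forall_refl; case: ifP; rewrite ?mul0r.
Qed.

Lemma diag_mul0 u v Dv : diagD v Dv -> (forall h, Dv h = 0) ->
  diagD (Smul u v) (fun _ => 0).
Proof.
move=> dv z g h; rewrite Mentry_mul; last by move=> x /negbTE nx; rewrite dv nx.
by rewrite dv forall_refl z mulr0; case: ifP.
Qed.

Lemma diag_single (c : K) a : (forall i, i \in I -> a.1 i = a.2 i) ->
  diagD [:: (c, a)] (fun h => if [forall i in I, (a.2 i <= h i)%N]
     then RC c * \prod_(k in ~: I) RX k ^ ((a.1 k)%:Z - (a.2 k)%:Z) else 0).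
Proof.
move=> ea g h; rewrite MentryE big_seq1 /= /phi.
case: (boolP [forall i in I, g i == h i]) => [/forall_inP gh|/forall_inPn [i iI ngh]].
  have -> : [forall i in I, (a.2 i <= h i)%N && (g i == h i - a.2 i + a.1 i)%N] =
      [forall i in I, (a.2 i <= h i)%N].
    apply: eq_forallb_in => i iI; rewrite (eqP (gh i iI)) (ea i iI).
    by case: leqP => // hle; apply/eqP; lia.
  by case: ifP; rewrite ?mulr0.
have -> : [forall i in I, (a.2 i <= h i)%N && (g i == h i - a.2 i + a.1 i)%N] = false.
  apply/negbTE/forall_inPn; exists i => //; rewrite (ea i iI).
  by apply/negP => /andP [hle /eqP e]; move: ngh; rewrite e; move/eqP; lia.
by rewrite mulr0.
Qed.

Lemma diag_one : diagD one (fun _ => 1).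
Proof.
apply: diag_eq; first by apply: diag_single => i _; rewrite /mono1 !ffunE.
move=> h; rewrite /mono1 /=.
have -> : [forall i in I, ([ffun=> 0%N] : {ffun 'I_n -> nat}) i <= h i]%N.
  by apply/forall_inP => i _; rewrite ffunE.
by rewrite RC1 mul1r big1 // => k _; rewrite !ffunE subrr expr0z.
Qed.

Lemma prod_delta (k : 'I_n) (z : int) : k \notin I ->
  \prod_(l in ~: I) RX l ^ (((l == k) : nat)%:Z * z) = RX k ^ z.
Proof.
move=> kI; rewrite (bigD1 k) ?inE //= eqxx mul1r big1 ?mulr1 // => l /andP [_ /negbTE ->].
by rewrite mul0r expr0z.
Qed.

Lemma diag_Sx k : k \notin I -> diagD (Sx K k) (fun _ => RX k).
Proof.
move=> kI; apply: diag_eq.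
  apply: diag_single => i iI /=; rewrite !ffunE; case: eqP => // ik.
  by move: kI; rewrite -ik iI.
move=> h /=; have -> : [forall i in I, ([ffun=> 0%N] : {ffun 'I_n -> nat}) i <= h i]%N.
  by apply/forall_inP => i _; rewrite ffunE.
rewrite RC1 mul1r -[RHS](prod_delta 1 kI); apply: eq_bigr => l _.
by rewrite !ffunE subr0 mulr1.
Qed.

Lemma diag_Sy k : k \notin I -> diagD (Sy K k) (fun _ => (RX k)^-1).
Proof.
move=> kI; apply: diag_eq.
  apply: diag_single => i iI /=; rewrite !ffunE; case: eqP => // ik.
  by move: kI; rewrite -ik iI.
move=> h /=; have -> : [forall i in I, ([ffun k0 => (k0 == k) : nat] : {ffun 'I_n -> nat}) i <= h i]%N.
  apply/forall_inP => i iI; rewrite ffunE; case: eqP => // ik.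
  by move: kI; rewrite -ik iI.
rewrite RC1 mul1r -exprN1 -[RHS](prod_delta (-1) kI); apply: eq_bigr => l _.
by rewrite !ffunE sub0r mulrN1.
Qed.


Lemma diag_Se k : diagD (Se K k) (fun h => if k \in I then ((h k == 0)%N)%:R else 0).
Proof.
have e : Smul (Sx K k) (Sy K k) =
  [:: (1 * 1, mono_mul ([ffun l => (l == k) : nat], [ffun=> 0%N])
                       ([ffun=> 0%N], [ffun l => (l == k) : nat]))] by [].
apply: diag_eq.
  apply: diag_cat; first exact: diag_one.
  by apply: diag_opp; rewrite e; apply: diag_single => i _; rewrite /mono_mul /= !ffunE; lia.
move=> h /=; rewrite mulr1 RC1 mul1r big1; last first.
  by move=> l _; rewrite /mono_mul /= !ffunE subn0 addn0 add0n subrr expr0z.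
case: (boolP (k \in I)) => kI.
  case: (eqVneq (h k) 0%N) => hk.
    rewrite ifF ?subr0 //; apply/negbTE/forall_inPn; exists k => //.
    by rewrite !ffunE eqxx hk.
  rewrite ifT ?subrr //; apply/forall_inP => i _; rewrite !ffunE.
  by case: eqP => [->|]; rewrite // lt0n.
rewrite ifT ?subrr //; apply/forall_inP => i iI; rewrite !ffunE.
by case: eqP => [ik|] //; move: kI; rewrite -ik iI.
Qed.

Definition zI h : F := \prod_(k <- enum I) ((h k == 0)%N)%:R.

Lemma diag_SeI_seq (l : seq 'I_n) : diagD (Sprod [seq Se K k | k <- l])
  (fun h => \prod_(k <- l) (if k \in I then ((h k == 0)%N)%:R else 0)).
Proof.
elim: l => [|a l IH] /=.
  by apply: diag_eq; first exact: diag_one; move=> h; rewrite big_nil.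
by apply: diag_eq; first exact: (diag_mul (diag_Se a) IH); move=> h; rewrite big_cons.
Qed.

Lemma diag_fac_on (w : Sn) Dw : diagD w Dw ->
  diagD (Sadd one (Smul (Ssub w one) (SeI K I))) (fun h => 1 + (Dw h - 1) * zI h).
Proof.
move=> dw; apply: diag_eq.
  apply: diag_cat; first exact: diag_one.
  apply: diag_mul; last exact: diag_SeI_seq.
  by apply: diag_cat; [exact: dw | apply: diag_opp; exact: diag_one].
move=> h /=; congr (_ + _ * _); rewrite /zI big_seq [RHS]big_seq.
by apply: eq_bigr => k; rewrite mem_enum => ->.
Qed.

Lemma diag_fac_off (w : Sn) (P : {set 'I_n}) : (exists2 k, k \in P & k \notin I) ->
  diagD (Sadd one (Smul (Ssub w one) (SeI K P))) (fun _ => 1).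
Proof.
move=> [k kP kI]; apply: diag_eq.
  apply: diag_cat; first exact: diag_one.
  apply: diag_mul0; first exact: diag_SeI_seq.
  by move=> h /=; rewrite (bigD1_seq k) ?mem_enum ?enum_uniq //= (negbTE kI) mul0r.
by move=> h /=; rewrite addr0.
Qed.

End Mat.

Lemma detT_diag (R : comNzRingType) (T : finType) (A : T -> T -> R) :
  (forall t t', t != t' -> A t t' = 0) -> detT A = \prod_t A t t.
Proof.
move=> off; rewrite /detT (bigD1 1%g) //= [X in _ + X]big1 ?addr0.
  rewrite odd_perm1 expr0 mul1r; apply: eq_bigr => t _; by rewrite perm1.
move=> s s1; case: (pickP (fun t => s t != t)) => [t st|all].
  by rewrite (bigD1 t) //= off 1?eq_sym // mul0r mulr0.
case/eqP: s1; apply/permP => t; rewrite perm1; move: (all t) => /= /negbFE/eqP //.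
Qed.




Section Box.
Variables (K : fieldType) (n : nat) (I : {set 'I_n}).
Local Notation F := (Ratf K n).

Lemma box_val N (h : box I N) k : k \notin I -> val (val h k) = 0%N.
Proof. by move=> kI; have /forallP/(_ k) := valP h; rewrite kI => /eqP. Qed.

Definition hv N (h : box I N) : 'I_n -> nat := fun k => val (val h k).

Lemma det_of_diag (u : Sn K n) D N : diagD I u D ->
  detT (@Mtrunc K n I u N) = \prod_(h : box I N) D (hv h).
Proof.
move=> d; rewrite detT_diag.
  by apply: eq_bigr => h _; rewrite /Mtrunc d forall_refl.
move=> g h gh; rewrite /Mtrunc d ifF //; apply/negbTE; apply: contra gh.
move=> /forall_inP H; apply/eqP/val_inj/ffunP => k; apply: val_inj.
case: (boolP (k \in I)) => kI; first exact: (eqP (H k kI)).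
by rewrite !box_val.
Qed.

Lemma box0_proof N :
  [forall k, (k \notin I) ==> (val (([ffun=> ord0] : {ffun 'I_n -> 'I_N.+1}) k) == 0%N)].
Proof. by apply/forallP => k; rewrite ffunE eqxx implybT. Qed.

Definition box0 N : box I N := exist (fun g : {ffun 'I_n -> 'I_N.+1} => [forall k, (k \notin I) ==> (val (g k) == 0%N)]) _ (box0_proof N).

Lemma hv_box0 N k : hv (box0 N) k = 0%N.
Proof. by rewrite /hv /box0 /= ffunE. Qed.

Lemma box_prod N (c : F) :
  \prod_(h : box I N) (1 + (c - 1) * zI K I (hv h)) = c.
Proof.
rewrite (bigD1 (box0 N)) // big1.
  apply: (etrans (mulr1 _)); rewrite /zI big1_seq; first by rewrite mulr1 addrC subrK.
  by move=> k _; rewrite hv_box0 eqxx.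
move=> h hb; case: (pickP (fun k => hv h k != 0%N)) => [k hk|all].
  have kI : k \in I by apply: contraTT hk => kI; rewrite /hv box_val.
  rewrite /zI (bigD1_seq k) ?mem_enum ?enum_uniq // (negbTE hk).
  by rewrite /= mul0r mulr0 addr0.
case/eqP: hb; apply/val_inj/ffunP => k; apply: val_inj.
have := all k; rewrite -/(hv h k) => /negbFE/eqP ->.
exact: (esym (hv_box0 N k)).
Qed.

End Box.


Unset Implicit Arguments.
Theorem lemma5p9 (K : fieldType) (n s : nat) (I J : {set 'I_n})
  (mJ i j : 'I_n) :
  (3 <= n)%N -> (1 <= s)%N -> (s <= n.-1)%N ->
  #|I| = s -> #|J| = s.+1 ->
  (exists2 t : 'I_n, t \in J & val t = n.-1) ->
  mJ \in J -> val mJ != n.-1 ->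
  (forall k : 'I_n, k \in J -> val k != n.-1 -> (k <= mJ)%N) ->
  i \notin I -> j \in J :\ mJ ->
  in_units_1a s (theta K mJ j J) /\
  deg_is I i (theta K mJ j J)
    (if (I == J :\ mJ) && (i == mJ) then -1
     else if (I == J :\ j) && (i == j) then 1 else 0).
Proof.
move=> _ _ _ cI cJ _ mJJ _ _ iI jJm.
have /andP [jm jJ] : (j != mJ) && (j \in J) by rewrite -in_setD1.
split; first by apply: units_theta => //; rewrite eq_sym.
set P := J :\ mJ; set Q := J :\ j.
have cP : #|P| = s by move: cJ; rewrite (cardsD1 mJ J) mJJ => -[].
have cQ : #|Q| = s by move: cJ; rewrite (cardsD1 j J) jJ => -[].
have mQ : mJ \in Q by rewrite in_setD1 mJJ eq_sym jm.
have mP : mJ \notin P by rewrite setD11.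
have jQ : j \notin Q by rewrite setD11.
have off : forall X : {set 'I_n}, #|X| = s -> X != I -> exists2 k, k \in X & k \notin I.
  move=> X cX XI; apply/subsetPn; apply: contra XI => sub.
  by rewrite eqEcard sub cX cI leqnn.
case: (eqVneq I P) => [IP|IP].
  have mI : mJ \notin I by rewrite IP.
  have QI : exists2 k, k \in Q & k \notin I by exists mJ.
  have d : diagD I (theta K mJ j J)
      (fun h => 1 + ((RX K mJ)^-1 - 1) * zI K I h).
    rewrite /theta -/P -/Q -IP; apply: diag_eq; first apply: diag_mul.
        by apply: diag_fac_on; apply: diag_Sy.
      exact: diag_fac_off.
    by move=> h /=; rewrite mulr1.
  exists 1, (fun k => ((k == mJ) : nat)%:Z * -1); split.
  - exact: oner_neq0.
  - have IQf : (I == Q) = false by apply/negbTE; apply: contraNneq mI => ->.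
    by rewrite IQf; case: eqP.
  exists 0%N => N _; rewrite (det_of_diag N d).
  by rewrite box_prod RC1 mul1r prod_delta // exprN1.
case: (eqVneq I Q) => [IQ|IQ].
  have jI : j \notin I by rewrite IQ.
  have PI : exists2 k, k \in P & k \notin I by exists j.
  have d : diagD I (theta K mJ j J)
      (fun h => 1 + (RX K j - 1) * zI K I h).
    rewrite /theta -/P -/Q -IQ; apply: diag_eq; first apply: diag_mul.
        exact: diag_fac_off.
      by apply: diag_fac_on; apply: diag_Sx.
    by move=> h /=; rewrite mul1r.
  exists 1, (fun k => ((k == j) : nat)%:Z * 1); split.
  - exact: oner_neq0.
  - by case: eqP => _ /=; rewrite ?mul1r ?mul0r.
  exists 0%N => N _; rewrite (det_of_diag N d).
  by rewrite box_prod RC1 mul1r prod_delta // expr1z.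
have d : diagD I (theta K mJ j J) (fun h => 1).
  rewrite /theta -/P -/Q; apply: diag_eq; first apply: diag_mul; try apply: diag_fac_off.
  - by apply: off => //; rewrite eq_sym.
  - by apply: off => //; rewrite eq_sym.
  - by move=> h /=; rewrite mulr1.
exists 1, (fun _ => 0); split.
- exact: oner_neq0.
- by [].
exists 0%N => N _; rewrite (det_of_diag N d) RC1 mul1r big1 //.
by rewrite big1 // => k _; rewrite expr0z.
Qed.
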